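(* Let $\Gamma=\Gamma_1+\cdots+\Gamma_n$ be the disjoint union of labeled graphs $\Gamma_i$ with $V_i$ vertices, $\Gamma_i\neq\Gamma_j$ for $i\neq j$, where $\Gamma$ has $V=V_1+\cdots+V_n$ vertices labeled so that the vertices of $\Gamma_1$ come first, then those of $\Gamma_2$, etc., each block keeping its internal order. Then $$c_\Gamma=\frac{V!}{V_1!\cdots V_n!}\,c_{\Gamma_1}\cdots c_{\Gamma_n}.$$
   Context: A labeled graph with $V$ vertices and $E$ edges is a map $s:\{1,\ldots,E\}\to\mathcal{P}_2\{1,\ldots,V\}$. Each edge with $s(e)=\{i,j\}$, $i<j$, is oriented $i\to j$. Define $c_\Gamma:=\sum_{\sigma\in S_V}\prod_{e:\,i\to j}\operatorname{sign}(\sigma(j)-\sigma(i))$. *)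

(* Defs.v *)
From mathcomp Require Import all_boot all_order all_fingroup all_algebra.
Set Implicit Arguments. Unset Strict Implicit. Unset Printing Implicit Defensive.
Import Order.TTheory GRing.Theory Num.Theory.

(* A labeled graph with V vertices and E edges: s maps each edge e : 'I_E to a
   2-element subset {i,j} of the vertices 'I_V, recorded as the pair (i,j) with
   i < j (the orientation i -> j). *)
Record lgraph := LGraph {
  gV : nat;
  gE : nat;
  gs : 'I_gE -> 'I_gV * 'I_gV;
  gs_ok : forall e, (gs e).1 < (gs e).2 }.

Definition cG (G : lgraph) : int :=
  \sum_(s : 'S_(gV G))
     \prod_(e < gE G) sgz ((s (gs e).2)%:Z - (s (gs e).1)%:Z).

Definition gunion_s (G H : lgraph) (e : 'I_(gE G + gE H)) :
  'I_(gV G + gV H) * 'I_(gV G + gV H) :=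
  match split e with
  | inl e1 => (lshift (gV H) (gs e1).1, lshift (gV H) (gs e1).2)
  | inr e2 => (rshift (gV G) (gs e2).1, rshift (gV G) (gs e2).2)
  end.

Lemma gunion_ok (G H : lgraph) e : (@gunion_s G H e).1 < (@gunion_s G H e).2.
Proof.
rewrite /gunion_s; case: split => x /=; first exact: gs_ok.
by rewrite ltn_add2l gs_ok.
Qed.

Definition gunion (G H : lgraph) : lgraph :=
  LGraph (@gunion_ok G H).

Definition gempty : lgraph :=
  @LGraph 0 0 (fun e => match e with Ordinal _ h => False_rect _ (notF h) end)
    (fun e => match e with Ordinal _ h => False_rect _ (notF h) end).

Definition gunion_big (n : nat) (G : 'I_n -> lgraph) : lgraph :=
  foldr gunion gempty [seq G i | i <- enum 'I_n].

(* Main.v *)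
Require Import Defs.
From mathcomp Require Import all_boot all_order all_fingroup all_algebra.
From mathcomp Require Import ring.
Import Order.TTheory GRing.Theory Num.Theory.
Set Implicit Arguments. Unset Strict Implicit. Unset Printing Implicit Defensive.

Lemma sgzB (x y : nat) : sgz (x%:Z - y%:Z)%R =
  (if y < x then 1%R else if x < y then (-1)%R else 0%R).
Proof.
case: (ssrnat.ltngtP x y) => h; apply/eqP.
- by rewrite sgz_cp0 subr_lt0 ltz_nat.
- by rewrite sgz_cp0 subr_gt0 ltz_nat.
- by rewrite sgz_cp0 h subrr.
Qed.

Lemma rk_lt k (f : 'I_k -> nat) i : #|[set j | f j < f i]| < k.
Proof.
rewrite -[X in _ < X]card_ord -cardsT; apply: proper_card.
rewrite properT; apply/eqP => h.
have : i \in [set j | f j < f i] by rewrite h inE.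
by rewrite inE ltnn.
Qed.

Definition rk k (f : 'I_k -> nat) (i : 'I_k) : 'I_k := Ordinal (rk_lt f i).

Lemma rk_mono k (f : 'I_k -> nat) i j : f i < f j -> rk f i < rk f j.
Proof.
move=> lt; rewrite /=; apply: proper_card; apply/properP; split.
  by apply/subsetP => x; rewrite !inE => h; apply: ltn_trans h lt.
by exists i; rewrite !inE ?ltnn.
Qed.

Lemma rk_ltE k (f : 'I_k -> nat) : injective f -> forall i j,
  (rk f i < rk f j) = (f i < f j).
Proof.
move=> fi i j; case: (ssrnat.ltngtP (f i) (f j)) => h.
- by rewrite rk_mono.
- by apply/negbTE; rewrite -leqNgt ltnW // rk_mono.
- by rewrite (fi _ _ h) ltnn.
Qed.

Lemma rk_inj k (f : 'I_k -> nat) : injective f -> injective (rk f).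
Proof.
move=> fi i j e; apply: (fi); case: (ssrnat.ltngtP (f i) (f j)) => // h.
  by move: h; rewrite -(rk_ltE fi) e ltnn.
by move: h; rewrite -(rk_ltE fi) e ltnn.
Qed.

Definition w V E (es : 'I_E -> 'I_V * 'I_V) (f : 'I_V -> nat) : int :=
  \prod_(e < E) sgz ((f (es e).2)%:Z - (f (es e).1)%:Z)%R.

Lemma w_ext V E (es : 'I_E -> 'I_V * 'I_V) f g : f =1 g -> w es f = w es g.
Proof. by move=> fg; apply: eq_bigr => e _; rewrite !fg. Qed.

Lemma w_rk V E (es : 'I_E -> 'I_V * 'I_V) f : injective f ->
  w es f = w es (fun i => nat_of_ord (rk f i)).
Proof. by move=> fi; apply: eq_bigr => e _; rewrite !sgzB !rk_ltE. Qed.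

Lemma rk_cnt k N (f : 'I_k -> 'I_N) : injective f -> forall i,
  nat_of_ord (rk (fun x => nat_of_ord (f x)) i) =
  #|[set y in f @: setT | nat_of_ord y < f i]|.
Proof.
move=> fi i /=.
transitivity #|f @: [set j | nat_of_ord (f j) < f i]|; first by rewrite card_imset.
apply: eq_card => y.
rewrite !inE; apply/imsetP/andP => [[x]|[/imsetP[x _ ->] h]].
  by rewrite inE => h ->; split => //; apply: imset_f.
by exists x; rewrite ?inE.
Qed.

Lemma cnt_mono N (A : {set 'I_N}) x y : x \in A -> nat_of_ord x < y ->
  #|[set z in A | nat_of_ord z < x]| < #|[set z in A | nat_of_ord z < y]|.
Proof.
move=> xA lt; apply: proper_card; apply/properP; split.
  by apply/subsetP => z; rewrite !inE => /andP[-> h]; apply: ltn_trans h lt.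
by exists x; rewrite !inE ?ltnn ?xA ?lt.
Qed.

Lemma rk_eq k N (f g : 'I_k -> 'I_N) : injective f -> injective g ->
  f @: setT = g @: setT ->
  (forall i, nat_of_ord (rk (fun x => nat_of_ord (f x)) i) =
             rk (fun x => nat_of_ord (g x)) i) -> f =1 g.
Proof.
move=> fi gi fg e i; have := e i; rewrite (rk_cnt fi) (rk_cnt gi) -fg.
have fA : f i \in f @: setT by apply: imset_f.
have gA : g i \in f @: setT by rewrite fg; apply: imset_f.
case: (ssrnat.ltngtP (f i) (g i)) => h.
- by move=> c; move: (cnt_mono fA h); rewrite c ltnn.
- by move=> c; move: (cnt_mono gA h); rewrite c ltnn.
- by move=> _; apply: val_inj.
Qed.
Unset Implicit Arguments.

Section Bin.
Variables a b : nat.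
Implicit Types s : 'S_(a + b).

Definition fl s (i : 'I_a) := s (lshift b i).
Definition fr s (j : 'I_b) := s (rshift a j).

Lemma fl_inj s : injective (fl s).
Proof. by move=> i j /perm_inj /lshift_inj. Qed.
Lemma fr_inj s : injective (fr s).
Proof. by move=> i j /perm_inj /rshift_inj. Qed.
Lemma vfl_inj s : injective (fun i => nat_of_ord (fl s i)).
Proof. by move=> i j /val_inj /fl_inj. Qed.
Lemma vfr_inj s : injective (fun i => nat_of_ord (fr s i)).
Proof. by move=> i j /val_inj /fr_inj. Qed.

Definition pL s : 'S_a := perm (rk_inj (vfl_inj s)).
Definition pR s : 'S_b := perm (rk_inj (vfr_inj s)).
Definition psi s := (fl s @: setT, (pL s, pR s)).

Lemma fr_compl s : fr s @: setT = ~: (fl s @: setT).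
Proof.
apply/setP => x; rewrite inE -(permKV s x) -(splitK (s^-1%g x)).
case: split => [i|j] /=.
- rewrite (imset_f (fl s) (in_setT i)) /=; apply/imsetP => -[j _ /perm_inj /eqP].
  by rewrite eq_lrshift.
- rewrite (imset_f (fr s) (in_setT j)); apply/esym/negP => /imsetP[i _ /perm_inj /eqP].
  by rewrite eq_rlshift.
Qed.

Lemma psi_inj : injective psi.
Proof.
move=> s s' [eA eL eR]; apply/permP => x; rewrite -(splitK x).
case: split => [i|j] /=.
- apply: (rk_eq (fl_inj s) (fl_inj s') eA) => k.
  by move/permP: eL => /(_ k); rewrite !permE => ->.
- have eB : fr s @: setT = fr s' @: setT by rewrite !fr_compl eA.
  apply: (rk_eq (fr_inj s) (fr_inj s') eB) => k.
  by move/permP: eR => /(_ k); rewrite !permE => ->.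
Qed.

Definition D := [set y : {set 'I_(a + b)} * ({perm 'I_a} * {perm 'I_b}) | #|y.1| == a].

Lemma psi_onto : psi @: setT = D.
Proof.
apply/eqP; rewrite eqEcard; apply/andP; split.
  apply/subsetP => y /imsetP[s _ ->]; rewrite inE /= card_imset ?cardsT ?card_ord //.
  exact: fl_inj.
have -> : D = setX [set A : {set 'I_(a+b)} | #|A| == a] setT.
  by apply/setP => -[A pq]; rewrite in_setX !inE andbT.
rewrite cardsX card_draws cardsT card_prod !card_Sn card_ord card_imset; last exact: psi_inj.
rewrite cardsT card_Sn -(bin_fact (leq_addr b a)) addKn.
exact: leqnn.
Qed.
End Bin.

Lemma cG_union G H :
  cG (gunion G H) = (('C(gV G + gV H, gV G))%:R * cG G * cG H)%R.
Proof.
pose Phi (y : {set 'I_(gV G + gV H)} * ({perm 'I_(gV G)} * {perm 'I_(gV H)})) :=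
  (w (@gs G) (fun i => nat_of_ord (y.2.1 i)) * w (@gs H) (fun j => nat_of_ord (y.2.2 j)))%R.
transitivity (\sum_(s : 'S_(gV G + gV H)) Phi (@psi _ _ s))%R.
  rewrite /cG; apply: eq_bigr => s _; rewrite big_split_ord /=.
  congr (_ * _)%R.
    transitivity (w (@gs G) (fun i => nat_of_ord (@fl _ _ s i))).
      apply: eq_bigr => e _.
      by rewrite /gunion_s (unsplitK (inl e : 'I_(gE G) + 'I_(gE H))).
    by rewrite (w_rk (@gs G) (@vfl_inj _ _ s)); apply: w_ext => i; rewrite /= permE.
  transitivity (w (@gs H) (fun i => nat_of_ord (@fr _ _ s i))).
    apply: eq_bigr => e _.
    by rewrite /gunion_s (unsplitK (inr e : 'I_(gE G) + 'I_(gE H))).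
  by rewrite (w_rk (@gs H) (@vfr_inj _ _ s)); apply: w_ext => i; rewrite /= permE.
transitivity (\sum_(y in D (gV G) (gV H)) Phi y)%R.
  rewrite -(@psi_onto (gV G) (gV H)) big_imset; last by move=> x y _ _; apply: psi_inj.
  by apply: eq_bigl => s; rewrite inE.
transitivity (\sum_(A : {set 'I_(gV G + gV H)} | #|A| == gV G) (cG G * cG H))%R.
  symmetry.
  rewrite (eq_bigr (fun A => \sum_(p : 'S_(gV G)) \sum_(q : 'S_(gV H)) Phi (A, (p, q))))%R; last first.
    by move=> A _; rewrite /cG big_distrlr.
  under eq_bigr do rewrite pair_big.
  rewrite pair_big; apply: eq_big => [y|y _]; first by rewrite inE !andbT.
  by case: y => A [p q].
rewrite (eq_bigl (fun A => A \in [set A : {set 'I_(gV G + gV H)} | #|A| == gV G])); last first.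
  by move=> A; rewrite inE.
by rewrite sumr_const card_draws card_ord -mulrA mulr_natl.
Qed.


Local Open Scope ring_scope.

Lemma gVfold (l : seq lgraph) :
  gV (foldr gunion gempty l) = (\sum_(g <- l) gV g)%N.
Proof. by elim: l => [|g l IH]; rewrite ?big_nil ?big_cons //= IH. Qed.

Lemma cG_empty : cG gempty = 1.
Proof. by rewrite /cG /= (eq_bigr (fun _ => 1)) ?sumr_const ?card_Sn // => s _; rewrite big_ord0. Qed.

Lemma key (l : seq lgraph) :
  (cG (foldr gunion gempty l))%:~R * ((\prod_(g <- l) (gV g)`!)%N)%:R =
  (((\sum_(g <- l) gV g)`!)%N)%:R * \prod_(g <- l) (cG g)%:~R :> rat.
Proof.
elim: l => [|g l IH].
    by rewrite !big_nil cG_empty /= !mulr1.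

change (foldr gunion gempty (g :: l)) with (gunion g (foldr gunion gempty l)).
rewrite cG_union !big_cons /= !intrM -gVfold.
have := bin_fact (leq_addr (gV (foldr gunion gempty l)) (gV g)); rewrite addKn => <-.
rewrite !natrM -gVfold in IH *.
rewrite rmorph_nat.
set C := 'C(_, _)%:R; set cg := (cG g)%:~R; set X := (cG _)%:~R; set P := (\prod_(j <- l) _)%:R.
set fa := (gV g)`!%:R; set fs := (gV _)`!%:R.
transitivity (C * cg * fa * (X * P)); first by ring.
by rewrite IH; ring.
Qed.

Theorem mainTheorem9 (n : nat) (G : 'I_n -> lgraph) :
  (forall i j : 'I_n, i != j -> G i <> G j) ->
  (cG (gunion_big G))%:~R =
    ((\sum_(i < n) gV (G i))`!)%:R / (\prod_(i < n) (gV (G i))`!)%:R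
      * \prod_(i < n) (cG (G i))%:~R :> rat.
Proof.
move=> _.
have P0 : ((\prod_(i < n) (gV (G i))`!)%N)%:R != 0 :> rat.
  by rewrite pnatr_eq0 -lt0n prodn_gt0 // => i; apply: fact_gt0.
apply: (mulIf P0); rewrite mulrAC divfK //.
have := key [seq G i | i <- enum 'I_n].
by rewrite !big_map; apply.
Qed.
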